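(* Let $C\in M_n(\mathbb{C})$, $D=I-C^*C$, and define for $t\in\mathbb{R}$ $$H(t)=\tfrac12(e^{-it}C+e^{it}C^* ),\qquad K(t)=\tfrac{i}{2}(e^{it}C^*-e^{-it}C),$$ $$T_1(t,\mu)=\operatorname{tr}\bigl((\mu I-H(t))^{-1}K(t)\bigr),\qquad T_2(t,\lambda)=\operatorname{tr}\bigl((\lambda^2I-\lambda H(t)-\tfrac14 D)^{-1}\lambda K(t)\bigr),$$ regarded as rational functions of $\mu$ (resp. $\lambda$) for each $t$. Let $P_C(x,y)=\det(I-xC-yC^* )$ and $Q_C(x,y)=\det(I-xC-yC^*-xyD)$. Then: (1) $T_1\equiv0$ (for all $t$ and all $\mu$) if and only if $P_C(x,y)\in\mathbb{C}[xy]$; (2) $T_2\equiv0$ if and only if $Q_C(x,y)\in\mathbb{C}[xy]$.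
   Context: $\mathbb{C}[xy]$ denotes the set of polynomials in $x,y$ that are polynomials in the single product $xy$. *)

(* Defs.v *)
From HB Require Import structures.
From mathcomp Require Import all_boot all_order all_algebra.
From mathcomp Require Import reals trigo.
From mathcomp Require Import complex.
Set Implicit Arguments. Unset Strict Implicit. Unset Printing Implicit Defensive.
Import Order.TTheory GRing.Theory Num.Theory.
Local Open Scope ring_scope.
Local Open Scope complex_scope.

Section Defs.
Variables (R : realType) (n : nat).
Local Notation C := (R[i]).

Definition adjmx (A : 'M[C]_n) : 'M[C]_n := (map_mx (@conjc R) A)^T.

Definition expit (t : R) : C := cos t +i* sin t.

Definition Dmx (A : 'M[C]_n) : 'M[C]_n := 1%:M - adjmx A *m A.

Definition Hmx (A : 'M[C]_n) (t : R) : 'M[C]_n :=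
  2^-1 *: (expit (- t) *: A + expit t *: adjmx A).

Definition Kmx (A : 'M[C]_n) (t : R) : 'M[C]_n :=
  ('i / 2) *: (expit t *: adjmx A - expit (- t) *: A).

(* T_1(t, mu) = tr((mu I - H(t))^{-1} K(t)), at points where the inverse exists *)
Definition T1 (A : 'M[C]_n) (t : R) (mu : C) : C :=
  \tr (invmx (mu%:M - Hmx A t) *m Kmx A t).

Definition T2mat (A : 'M[C]_n) (t : R) (la : C) : 'M[C]_n :=
  (la ^+ 2)%:M - la *: Hmx A t - 4^-1 *: Dmx A.

Definition T2 (A : 'M[C]_n) (t : R) (la : C) : C :=
  \tr (invmx (T2mat A t la) *m (la *: Kmx A t)).

(* Bivariate polynomials in x, y: {poly {poly C}}, with x := 'X (outer
   variable) and y := 'X%:P (inner variable). *)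
Definition cst2 (c : C) : {poly {poly C}} := (c%:P)%:P.
Definition varx : {poly {poly C}} := 'X.
Definition vary : {poly {poly C}} := ('X)%:P.

Definition PC (A : 'M[C]_n) : {poly {poly C}} :=
  \det (1%:M - varx *: map_mx cst2 A - vary *: map_mx cst2 (adjmx A)).

Definition QC (A : 'M[C]_n) : {poly {poly C}} :=
  \det (1%:M - varx *: map_mx cst2 A - vary *: map_mx cst2 (adjmx A)
        - (varx * vary) *: map_mx cst2 (Dmx A)).
End Defs.

Definition in_Cxy (R : realType) (p : {poly {poly R[i]}}) : Prop :=
  exists q : {poly R[i]}, p = (map_poly (@cst2 R) q).[varx R * vary R].

(* Main.v *)
Require Import Defs.
From HB Require Import structures.
From mathcomp Require Import all_boot all_order all_algebra.
From mathcomp Require Import reals trigo.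
From mathcomp Require Import complex.
From mathcomp Require Import ring perm zify.
Set Implicit Arguments. Unset Strict Implicit. Unset Printing Implicit Defensive.
Import Order.TTheory GRing.Theory Num.Theory.
Local Open Scope ring_scope.
Local Open Scope complex_scope.
Lemma coef1M (R : nzRingType) (p q : {poly R}) :
  (p * q)`_1 = p`_0 * q`_1 + p`_1 * q`_0.
Proof. by rewrite coefM !big_ord_recl big_ord0 addr0. Qed.

Lemma coef1_prod_seq (R : comNzRingType) (I : eqType) (r : seq I) (F : I -> {poly R}) :
  uniq r ->
  (\prod_(i <- r) F i)`_1 = \sum_(j <- r) (F j)`_1 * \prod_(i <- r | i != j) (F i)`_0.
Proof.
elim: r => [|x r IH] /=; first by rewrite !big_nil coefC.
case/andP => xr ur; rewrite big_cons coef1M IH // [in RHS]big_cons big_cons eqxx /=.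
have -> : \prod_(i <- r | i != x) (F i)`_0 = \prod_(i <- r) (F i)`_0.
  rewrite big_seq_cond [RHS]big_seq; apply: eq_bigl => i.
  by case: (boolP (i \in r)) => //= ir; apply/eqP => eix; rewrite -eix ir in xr.
rewrite coef0_prod addrC; congr (_ + _); rewrite big_distrr /=.
rewrite big_seq [RHS]big_seq; apply: eq_bigr => j jr.
rewrite big_cons; have -> : (x != j) by apply/eqP => exj; rewrite exj jr in xr.
by rewrite mulrCA.
Qed.

Lemma coef1_prod (R : comNzRingType) (I : finType) (F : I -> {poly R}) :
  (\prod_i F i)`_1 = \sum_j (F j)`_1 * \prod_(i | i != j) (F i)`_0.
Proof. by rewrite coef1_prod_seq ?index_enum_uniq. Qed.

Lemma jacobi (R : comNzRingType) n (M : 'M[{poly R}]_n) :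
  (\det M)`_1 = \tr (\adj (map_mx (coefp 0) M) *m map_mx (coefp 1) M).
Proof.
rewrite /determinant coef_sum.
have E (s : 'S_n) : ((-1) ^+ s * \prod_i M i (s i) : {poly R})`_1
   = \sum_j (-1) ^+ s * ((M j (s j))`_1 * \prod_(i | i != j) (M i (s i))`_0).
  rewrite -big_distrr /= -coef1_prod.
  by case: (odd_perm s); rewrite /= ?expr1 ?expr0 ?mulN1r ?mul1r ?coefN.
rewrite (eq_bigr _ (fun s _ => E s)) exchange_big /=.
rewrite /mxtrace; under [RHS]eq_bigr do rewrite mxE.
rewrite [RHS]exchange_big /=; apply: eq_bigr => j _.
rewrite (partition_big (fun s : 'S_n => s j) predT) //=.
apply: eq_bigr => k _; rewrite !mxE expand_cofactor big_distrl /=.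
apply: eq_bigr => s /eqP sjk; rewrite sjk -!mulrA; congr (_ * _).
rewrite mulrC; congr (_ * _); apply: eq_big => [i|i _]; first by rewrite eq_sym.
by rewrite mxE.
Qed.

Lemma horner_morph_wide (aR rR : comNzRingType) (f : {rmorphism aR -> rR}) (u : rR)
  (cfu : commr_rmorph f u) (p : {poly aR}) N : (size p <= N)%N ->
  horner_morph cfu p = \sum_(i < N) f p`_i * u ^+ i.
Proof.
move=> h; rewrite /horner_morph (@horner_coef_wide _ N).
  by apply: eq_bigr => i _; rewrite coef_map.
by apply: leq_trans h; rewrite /map_poly size_poly.
Qed.

Section S.
Variable R : realType.
Local Notation C := (R[i]).
Lemma expitNM (t : R) : expit (- t) * expit t = 1.
Proof.
rewrite /expit cosN sinN.
rewrite /GRing.mul /=.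
apply/eqP; rewrite eq_complex /= -(cos2Dsin2 t); apply/andP; split; apply/eqP; ring.
Qed.
Lemma i_neq0 : ('i : C) != 0.
Proof. by rewrite eq_complex /= oner_eq0 andbF. Qed.
Lemma expit_neq0 (t : R) : expit t != 0.
Proof. by apply/eqP => h; move: (expitNM t); rewrite h mulr0 => /esym/eqP; rewrite oner_eq0. Qed.


Local Notation ev2 x0 y0 := (@horner_morph _ _ (@horner_morph _ _ (@polyC C) y0
   (fun a => mulrC _ _)) x0 (fun a => mulrC _ _)).

Definition Nb (p : {poly {poly C}}) := maxn (size p) (\max_(i < size p) size (nth 0%R p i)).
Lemma Nb_p (p : {poly {poly C}}) : (size p <= Nb p)%N.
Proof. exact: leq_maxl. Qed.
Lemma Nb_c (p : {poly {poly C}}) i : (size (nth 0%R p i) <= Nb p)%N.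
Proof.
case: (ltnP i (size p)) => hi.
  apply: leq_trans (leq_maxr _ _); exact: (leq_bigmax (Ordinal hi)).
by rewrite nth_default // size_poly0.
Qed.

Lemma ev2E (x0 y0 : {poly C}) (p : {poly {poly C}}) : ev2 x0 y0 p =
  \sum_(i < Nb p) \sum_(j < Nb p) (p`_i`_j)%:P * y0 ^+ j * x0 ^+ i.
Proof.
rewrite (horner_morph_wide _ (Nb_p p)).
apply: eq_bigr => i _. rewrite [X in X * _]/=. rewrite (horner_morph_wide _ (Nb_c p i)) big_distrl /=.
by apply: eq_bigr => j _.
Qed.
Lemma ev2_varx (x0 y0 : {poly C}) : ev2 x0 y0 (varx R) = x0.
Proof. exact: horner_morphX. Qed.
Lemma ev2_vary (x0 y0 : {poly C}) : ev2 x0 y0 (vary R) = y0.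
Proof. rewrite /vary. rewrite (horner_morphC (f := horner_morph _)). exact: horner_morphX. Qed.
Lemma ev2_cst2 (x0 y0 : {poly C}) (c : C) : ev2 x0 y0 (cst2 c) = c%:P.
Proof. rewrite /cst2 (horner_morphC (f := horner_morph _)). exact: horner_morphC. Qed.

Definition S0 (p : {poly {poly C}}) (a b : C) :=
  \sum_(i < Nb p) \sum_(j < Nb p) p`_i`_j * a ^+ i * b ^+ j.
Definition S1 (p : {poly {poly C}}) (a b : C) :=
  \sum_(i < Nb p) \sum_(j < Nb p) p`_i`_j * a ^+ i * b ^+ j * (j%:R - i%:R).
Definition lin (c d : C) : {poly C} := c%:P + d%:P * 'X.
Lemma lin0 c d : (lin c d)`_0 = c.
Proof. by rewrite /lin coefD coefC coefCM coefX mulr0 addr0. Qed.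
Lemma lin1 c d : (lin c d)`_1 = d.
Proof. by rewrite /lin coefD coefC coefCM coefX mulr1 add0r. Qed.
Lemma coef0X (q : {poly C}) k : (q ^+ k)`_0 = q`_0 ^+ k.
Proof. by elim: k => [|k IH]; rewrite ?expr0 ?coefC // !exprS coef0M IH. Qed.
Lemma powlin (q : {poly C}) (c e : C) k : q`_0 = c -> q`_1 = e * c ->
  (q ^+ k)`_1 = k%:R * e * c ^+ k.
Proof.
move=> h0 h1; elim: k => [|k IH]; first by rewrite expr0 coefC /= !mul0r.
rewrite exprS coef1M coef0X IH h0 h1 exprS -addn1 natrD; ring.
Qed.
Lemma coef0_ev2 (x0 y0 : {poly C}) p : (ev2 x0 y0 p)`_0 = S0 p x0`_0 y0`_0.
Proof.
rewrite ev2E coef_sum /S0; apply: eq_bigr => i _; rewrite coef_sum; apply: eq_bigr => j _.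
by rewrite !coef0M coefC /= !coef0X mulrAC.
Qed.
Lemma coef1_ev2 p a b :
  (ev2 (lin a (- 'i * a)) (lin b ('i * b)) p)`_1 = 'i * S1 p a b.
Proof.
rewrite ev2E coef_sum /S1 big_distrr; apply: eq_bigr => i _.
rewrite coef_sum big_distrr; apply: eq_bigr => j _.
rewrite coef1M coef0M coef1M !coefC /= ?mul0r ?addr0 !coef0X !lin0.
rewrite (powlin _ (lin0 _ _) (lin1 _ _)) (powlin _ (lin0 _ _) (lin1 _ _)).
ring.
Qed.

Lemma sum_delta (N i : nat) (G : nat -> {poly C}) :
  \sum_(k < N) G k * (i == k)%:R = if (i < N)%N then G i else 0.
Proof.
case: ltnP => hi.
  rewrite (bigD1 (Ordinal hi)) //= eqxx mulr1 big1 ?addr0 // => k hk.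
  suff -> : (i == k) = false by rewrite mulr0.
  by apply/negbTE; apply: contra hk => /eqP ik; apply/eqP/val_inj; rewrite /= ik.
rewrite big1 // => k _; suff -> : (i == k) = false by rewrite mulr0.
by apply/negbTE; apply: contraTneq hi => ->; rewrite -ltnNge ltn_ord.
Qed.

Lemma coef_Cxy (q : {poly C}) i :
  ((map_poly (@cst2 R) q).[varx R * vary R])`_i = (q`_i)%:P * 'X^i.
Proof.
rewrite (@horner_coef_wide _ (size q)); last by rewrite /map_poly size_poly.
have E (k : 'I_(size q)) : (map_poly (@cst2 R) q)`_k * (varx R * vary R) ^+ k
    = ((q`_k)%:P * 'X^k) *: 'X^k.
  rewrite -mul_polyC coef_map_id0 /cst2 ?polyC0 // polyCM exprMn /vary -rmorphXn /varx; ring.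
rewrite (eq_bigr _ (fun k _ => E k)) coef_sumMXn.
case: (ltnP i (size q)) => hi.
  rewrite (bigD1 (Ordinal hi)) /=; last by rewrite eqxx.
  rewrite big1 ?addr0 // => k /andP[/eqP ki hk].
  by case/eqP: hk; apply: val_inj.
rewrite big1; last by move=> k /eqP ki; move: (ltn_ord k); rewrite ki ltnNge hi.
by rewrite nth_default // polyC0 mul0r.
Qed.


Lemma in_CxyP (p : {poly {poly C}}) :
  in_Cxy p <-> (forall i j, i != j -> p`_i`_j = 0).
Proof.
split.
  move=> [q ->] i j ij; rewrite coef_Cxy coefCM coefXn.
  by rewrite eq_sym (negbTE ij) mulr0.
move=> h; exists (\poly_(i < size p) p`_i`_i).
apply/polyP => i; rewrite coef_Cxy; apply/polyP => j.
rewrite coefCM coefXn coef_poly.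
case: (eqVneq j i) => [->|ji]; last by rewrite mulr0 h // eq_sym.
rewrite mulr1; case: ltnP => // hi.
by rewrite [p`_i]nth_default // coef0.
Qed.

Lemma poly_eq0_cofinite (p q : {poly C}) : q != 0 ->
  (forall z, q.[z] != 0 -> p.[z] = 0) -> p = 0.
Proof.
move=> q0 h; have : p * q = 0.
  apply: (@roots_geq_poly_eq0 _ _ [seq i%:R | i <- iota 0 (size (p * q))]).
  - apply/allP => _ /mapP[i _ ->]; rewrite /root hornerM.
    by case: (eqVneq q.[i%:R] 0) => [->|/h ->]; rewrite ?mulr0 ?mul0r.
  - rewrite map_inj_uniq ?iota_uniq // => a b /eqP; by rewrite eqr_nat => /eqP.
  - by rewrite size_map size_iota.
by move/eqP; rewrite mulf_eq0 (negbTE q0) orbF => /eqP.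
Qed.

Lemma Re_expit (t : R) : complex.Re (expit t) = cos t.
Proof. by []. Qed.

Lemma poly_eq0_expit (r : {poly C}) : (forall t : R, r.[expit t] = 0) -> r = 0.
Proof.
move=> h.
pose x (k : nat) : R := (k.+1%:R)^-1.
have xin k : x k \in `[-1, 1].
  have xp : 0 < x k by rewrite invr_gt0 ltr0Sn.
  rewrite in_itv /=; apply/andP; split.
    by apply: le_trans (ltW xp); rewrite lerN10.
  by rewrite invf_le1 ?ler1n // ltr0Sn.
apply: (@roots_geq_poly_eq0 _ _ [seq expit (acos (x k)) | k <- iota 0 (size r)]).
- by apply/allP => _ /mapP[k _ ->]; rewrite /root h.
- rewrite map_inj_uniq ?iota_uniq // => a b e.
  have := congr1 (@complex.Re R) e; rewrite !Re_expit !acosK ?xin // => /invr_inj.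
  by move/eqP; rewrite eqr_nat => /eqP [].
- by rewrite size_map size_iota.
Qed.

Lemma dsum1 N (i0 j0 : 'I_N) (F : 'I_N -> 'I_N -> C) :
  (forall i j, F i j != 0 -> i = i0 /\ j = j0) ->
  \sum_(i < N) \sum_(j < N) F i j = F i0 j0.
Proof.
move=> hF; rewrite (bigD1 i0) //= (bigD1 j0) //= big1 ?addr0; last first.
  move=> j jj0; case: (eqVneq (F i0 j) 0) => // /hF[_ ej].
  by rewrite ej eqxx in jj0.
rewrite big1 ?addr0 // => i ii0; apply: big1 => j _.
case: (eqVneq (F i j) 0) => // /hF[ei _]; by rewrite ei eqxx in ii0.
Qed.

Lemma extract (p : {poly {poly C}}) : S0 p 0 0 != 0 ->
  (forall (t : R) (z : C), z != 0 -> S0 p (expit (- t) * z) (expit t * z) != 0 ->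
      S1 p (expit (- t) * z) (expit t * z) = 0) ->
  forall i j, i != j -> p`_i`_j = 0.
Proof.
move=> h00 h i0 j0 ij.
case: (ltnP i0 (Nb p)) => hi; last first.
  by rewrite [p`_i0]nth_default ?coef0 // (leq_trans (Nb_p p) hi).
case: (ltnP j0 (Nb p)) => hj; last by rewrite nth_default // (leq_trans (Nb_c p i0) hj).
have step1 (t : R) d : \sum_(i < Nb p) \sum_(j < Nb p)
    p`_i`_j * expit (- t) ^+ i * expit t ^+ j * (j%:R - i%:R) * (d == (i + j)%N)%:R = 0.
  set u := expit (- t); set v := expit t.
  pose E := \sum_(i < Nb p) \sum_(j < Nb p) (p`_i`_j * u ^+ i * v ^+ j)%:P * 'X^(i + j).
  pose G := \sum_(i < Nb p) \sum_(j < Nb p)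
     (p`_i`_j * u ^+ i * v ^+ j * (j%:R - i%:R))%:P * 'X^(i + j).
  have EE z : E.[z] = S0 p (u * z) (v * z).
    rewrite /E /S0 horner_sum; apply: eq_bigr => i _; rewrite horner_sum.
    apply: eq_bigr => j _; rewrite hornerCM hornerXn !exprMn exprD; ring.
  have GE z : G.[z] = S1 p (u * z) (v * z).
    rewrite /G /S1 horner_sum; apply: eq_bigr => i _; rewrite horner_sum.
    apply: eq_bigr => j _; rewrite hornerCM hornerXn !exprMn exprD; ring.
  have G0 : G = 0.
    apply: (@poly_eq0_cofinite _ ('X * E)).
      rewrite mulf_neq0 ?polyX_eq0 //; apply/eqP => E0.
      have : S0 p (u * 0) (v * 0) != 0 by rewrite !mulr0.
      by rewrite -EE E0 horner0 eqxx.
    move=> z; rewrite hornerM hornerX mulf_eq0 negb_or => /andP[z0 Ez].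
    by rewrite GE; apply: h => //; rewrite -EE.
  transitivity (G`_d); last by rewrite G0 coef0.
  rewrite /G coef_sum; apply: eq_bigr => i _; rewrite coef_sum; apply: eq_bigr => j _.
  by rewrite coefCM coefXn.
pose d := (i0 + j0)%N.
pose r := \sum_(i < Nb p) \sum_(j < Nb p)
   (p`_i`_j * (j%:R - i%:R) * (d == (i + j)%N)%:R)%:P * 'X^(j + j).
have r0 : r = 0.
  apply: poly_eq0_expit => t.
  have uv : expit (- t) * expit t = 1 := expitNM t.
  rewrite -(mulr0 (expit t ^+ d)) -(step1 t d) big_distrr /r horner_sum.
  apply: eq_bigr => i _.
  rewrite horner_sum big_distrr; apply: eq_bigr => j _; rewrite hornerCM hornerXn.
  case: (eqVneq d (i + j)%N) => [->|_] /=; last by rewrite !mulr0n !mulr0 ?mul0r.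
  have key : expit t ^+ (i + j) * expit (- t) ^+ i = expit t ^+ j.
    by rewrite exprD mulrAC -exprMn [expit t * _]mulrC uv expr1n mul1r.
  rewrite ?eqxx ?mulr1.
  transitivity ((expit t ^+ (i + j) * expit (- t) ^+ i) * (p`_i`_j * expit t ^+ j * (j%:R - i%:R))); last by ring.
  rewrite key exprD; ring.
have : p`_i0`_j0 * (j0%:R - i0%:R) = 0.
  transitivity (r`_(j0 + j0)); last by rewrite r0 coef0.
  rewrite /r coef_sum; under eq_bigr => i _ do rewrite coef_sum.
  rewrite (dsum1 (i0 := Ordinal hi) (j0 := Ordinal hj)) /=.
    by rewrite coefCM coefXn /d !eqxx !mulr1.
  move=> i j; rewrite coefCM coefXn.
  case: (eqVneq (j0 + j0)%N (j + j)%N) => [e1|]; last by rewrite mulr0 eqxx.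
  case: (eqVneq d (i + j)%N) => [e2|]; last by rewrite mulr0 mul0r eqxx.
  move=> _; have ej : nat_of_ord j = j0 by lia.
  have ei : nat_of_ord i = i0 by rewrite /d in e2; lia.
  by split; apply: val_inj.
have ji : (j0 == i0) = false by apply/negbTE; rewrite eq_sym.
move/eqP; rewrite mulf_eq0 subr_eq0 eqr_nat ji orbF.
by move/eqP.
Qed.


Section Mat.
Variables (n : nat) (A : 'M[C]_n).

Definition PCmat : 'M[{poly {poly C}}]_n :=
  1%:M - varx R *: map_mx (@cst2 R) A - vary R *: map_mx (@cst2 R) (adjmx A).

Lemma trN (M : 'M[C]_n) (N : 'M[C]_n) : \tr (M *m - N) = - \tr (M *m N).
Proof. by rewrite mulmxN linearN. Qed.

Lemma ident1 (t : R) (z : C) : z != 0 ->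
  \det ((2 * z)^-1%:M - Hmx A t) =
     (2 * z)^-1 ^+ n * S0 (PC A) (expit (- t) * z) (expit t * z) /\
  \tr (\adj ((2 * z)^-1%:M - Hmx A t) *m Kmx A t) =
     - ((2 * z)^-1 ^+ n * ('i * S1 (PC A) (expit (- t) * z) (expit t * z))).
Proof.
move=> z0; set mu := (2 * z)^-1; set u := expit (- t); set v := expit t.
set x0 := lin (u * z) (- 'i * (u * z)); set y0 := lin (v * z) ('i * (v * z)).
set Ms := mu%:P *: map_mx (ev2 x0 y0) PCmat.
have dM : \det Ms = (mu ^+ n)%:P * ev2 x0 y0 (PC A).
  by rewrite detZ det_map_mx polyC_exp.
have M0 : map_mx (coefp 0) Ms = mu%:M - Hmx A t.
  apply/matrixP => i j; rewrite !mxE !rmorphB !rmorphM rmorph_nat /=.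
  rewrite ev2_varx ev2_vary !ev2_cst2 !coefB !coefMC -polyC_natr !coefC /x0 /y0 !lin0 /=.
  rewrite -mulr_natr /mu /u /v.
  have h2 : (2 : C) != 0 by rewrite pnatr_eq0.
  by field.
have M1 : map_mx (coefp 1) Ms = - Kmx A t.
  apply/matrixP => i j; rewrite !mxE !rmorphB !rmorphM rmorph_nat /=.
  rewrite ev2_varx ev2_vary !ev2_cst2 coefCM !coefB !coefMC -polyC_natr !coefC /x0 /y0 !lin1 /=.
  rewrite /mu /u /v.
  have h2 : (2 : C) != 0 by rewrite pnatr_eq0.
  by field.
split.
  have := congr1 (coefp 0) dM; rewrite -det_map_mx M0 /= => ->.
  by rewrite coefCM coef0_ev2 /x0 /y0 !lin0.
have := congr1 (coefp 1) dM; rewrite /= jacobi M0 M1 trN coefCM coef1_ev2 => e.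
by rewrite -e opprK.
Qed.

Definition QCmat : 'M[{poly {poly C}}]_n :=
  1%:M - varx R *: map_mx (@cst2 R) A - vary R *: map_mx (@cst2 R) (adjmx A)
        - (varx R * vary R) *: map_mx (@cst2 R) (Dmx A).

Lemma ident2 (t : R) (z : C) : z != 0 ->
  \det (T2mat A t (2 * z)^-1) =
     ((2 * z)^-1 ^+ 2) ^+ n * S0 (QC A) (expit (- t) * z) (expit t * z) /\
  \tr (\adj (T2mat A t (2 * z)^-1) *m ((2 * z)^-1 *: Kmx A t)) =
     - (((2 * z)^-1 ^+ 2) ^+ n * ('i * S1 (QC A) (expit (- t) * z) (expit t * z))).
Proof.
move=> z0; set la := (2 * z)^-1; set u := expit (- t); set v := expit t.
set x0 := lin (u * z) (- 'i * (u * z)); set y0 := lin (v * z) ('i * (v * z)).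
set Ms := (la ^+ 2)%:P *: map_mx (ev2 x0 y0) QCmat.
have dM : \det Ms = ((la ^+ 2) ^+ n)%:P * ev2 x0 y0 (QC A).
  by rewrite detZ det_map_mx -polyC_exp.
have h2 : (2 : C) != 0 by rewrite pnatr_eq0.
have vn0 : v != 0 by exact: expit_neq0.
have uE : u = v^-1.
  by apply: (mulIf vn0); rewrite mulVf // expitNM.
have M0 : map_mx (coefp 0) Ms = T2mat A t la.
  apply/matrixP => i j; rewrite /T2mat !mxE !rmorphB !rmorphM rmorph_nat /=.
  rewrite ev2_varx ev2_vary !ev2_cst2 !coefB !coefMC coef0M -polyC_natr !coefC /x0 /y0 !lin0 /=.
  rewrite -/u uE /la /v; case: (i == j) => /=; rewrite ?mulr1n ?mulr0n; field; by rewrite expit_neq0 z0.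
have M1 : map_mx (coefp 1) Ms = - (la *: Kmx A t).
  apply/matrixP => i j; rewrite !mxE !rmorphB !rmorphM rmorph_nat /=.
  rewrite ev2_varx ev2_vary !ev2_cst2 -polyCM coefCM !coefB !coefMC coef1M -polyC_natr !coefC /x0 /y0 !lin0 !lin1 /=.
  rewrite -/u uE /la /v; field; by rewrite expit_neq0 z0.
split.
  have := congr1 (coefp 0) dM; rewrite -det_map_mx M0 /= => ->.
  by rewrite coefCM coef0_ev2 /x0 /y0 !lin0.
have := congr1 (coefp 1) dM; rewrite /= jacobi M0 M1 trN coefCM coef1_ev2 => e.
by rewrite -e opprK.
Qed.

Lemma S0_PC : S0 (PC A) 0 0 = 1.
Proof.
have := coef0_ev2 0 0 (PC A); rewrite coef0 => <-.
have -> : PC A = \det PCmat by [].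
rewrite -det_map_mx (_ : map_mx _ PCmat = 1%:M) ?det1 ?coefC //.
apply/matrixP => i j; rewrite !mxE !rmorphB !rmorphM rmorph_nat /=.
by rewrite ev2_varx ev2_vary !mul0r !subr0.
Qed.

Lemma S0_QC : S0 (QC A) 0 0 = 1.
Proof.
have := coef0_ev2 0 0 (QC A); rewrite coef0 => <-.
have -> : QC A = \det QCmat by [].
rewrite -det_map_mx (_ : map_mx _ QCmat = 1%:M) ?det1 ?coefC //.
apply/matrixP => i j; rewrite !mxE !rmorphB !rmorphM rmorph_nat /=.
by rewrite ev2_varx ev2_vary !mul0r !subr0.
Qed.

Lemma tr_inv (M K : 'M[C]_n) : \det M != 0 ->
  \tr (invmx M *m K) = (\det M)^-1 * \tr (\adj M *m K).
Proof. by move=> d; rewrite /invmx unitmxE unitfE d -scalemxAl mxtraceZ. Qed.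

Lemma tr_map (f : {rmorphism {poly C} -> C}) (M : 'M[{poly C}]_n) :
  f (\tr M) = \tr (map_mx f M).
Proof. by rewrite /mxtrace rmorph_sum; apply: eq_bigr => i _; rewrite mxE. Qed.

Lemma h2C : (2 : C) != 0. Proof. by rewrite pnatr_eq0. Qed.

Lemma part1 :
  (forall (t : R) (mu : C), \det (mu%:M - Hmx A t) != 0 -> T1 A t mu = 0)
     <-> in_Cxy (PC A).
Proof.
split.
  move=> h; apply/in_CxyP; apply: extract; first by rewrite S0_PC oner_eq0.
  move=> t z z0 hS; have [d1 tr1] := ident1 t z0.
  have mu0 : (2 * z)^-1 != 0 by rewrite invr_eq0 mulf_neq0 ?h2C.
  have dn : \det ((2 * z)^-1%:M - Hmx A t) != 0 by rewrite d1 mulf_neq0 ?expf_neq0.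
  have := h t _ dn; rewrite /T1 tr_inv // tr1 => /eqP.
  rewrite mulf_eq0 invr_eq0 (negbTE dn) /= oppr_eq0 mulf_eq0 expf_eq0 (negbTE mu0) andbF /=.
  by rewrite mulf_eq0 (negbTE i_neq0) /= => /eqP.
move=> /in_CxyP hc t mu dn.
have S1z a b : S1 (PC A) a b = 0.
  rewrite /S1 big1 // => i _; rewrite big1 // => j _.
  case: (eqVneq i j) => [->|ij]; first by rewrite subrr mulr0.
  by rewrite hc ?mul0r.
have gen m : m != 0 -> \tr (\adj (m%:M - Hmx A t) *m Kmx A t) = 0.
  move=> m0; pose z := (2 * m)^-1.
  have z0 : z != 0 by rewrite invr_eq0 mulf_neq0 ?h2C.
  have -> : m = (2 * z)^-1.
    by rewrite /z; field.
  by have [_ ->] := ident1 t z0; rewrite S1z !mulr0 oppr0.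
rewrite /T1 tr_inv //; case: (eqVneq mu 0) => [mu0|]; last by move/gen ->; rewrite mulr0.
pose Pg := \tr (\adj ('X%:M - map_mx polyC (Hmx A t)) *m map_mx polyC (Kmx A t)).
have PgE m : Pg.[m] = \tr (\adj (m%:M - Hmx A t) *m Kmx A t).
  rewrite -[Pg.[m]]/(horner_eval m Pg) tr_map map_mxM map_mx_adj.
  have hcm : forall M : 'M[C]_n, map_mx (horner_eval m) (map_mx polyC M) = M.
    by move=> M; apply/matrixP => i j; rewrite !mxE horner_evalE hornerC.
  rewrite map_mxB hcm map_scalar_mx /= horner_evalE hornerX.
  by rewrite hcm.
have Pg0 : Pg = 0.
  apply: (@poly_eq0_cofinite _ 'X); first by rewrite polyX_eq0.
  by move=> m; rewrite hornerX => /gen; rewrite -PgE.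
by rewrite mu0 -PgE Pg0 horner0 mulr0.
Qed.

Lemma part2 :
  (forall (t : R) (la : C), \det (T2mat A t la) != 0 -> T2 A t la = 0)
     <-> in_Cxy (QC A).
Proof.
split.
  move=> h; apply/in_CxyP; apply: extract; first by rewrite S0_QC oner_eq0.
  move=> t z z0 hS; have [d1 tr1] := ident2 t z0.
  have la0 : (2 * z)^-1 != 0 by rewrite invr_eq0 mulf_neq0 ?h2C.
  have dn : \det (T2mat A t (2 * z)^-1) != 0 by rewrite d1 mulf_neq0 ?expf_neq0.
  have := h t _ dn; rewrite /T2 tr_inv // tr1 => /eqP.
  rewrite mulf_eq0 invr_eq0 (negbTE dn) /= oppr_eq0 mulf_eq0 !expf_eq0 (negbTE la0) !andbF /=.
  by rewrite mulf_eq0 (negbTE i_neq0) /= => /eqP.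
move=> /in_CxyP hc t la dn.
have S1z a b : S1 (QC A) a b = 0.
  rewrite /S1 big1 // => i _; rewrite big1 // => j _.
  case: (eqVneq i j) => [->|ij]; first by rewrite subrr mulr0.
  by rewrite hc ?mul0r.
rewrite /T2 tr_inv //; case: (eqVneq la 0) => [->|la0].
  by rewrite scale0r mulmx0 linear0 mulr0.
pose z := (2 * la)^-1.
have z0 : z != 0 by rewrite invr_eq0 mulf_neq0 ?h2C.
have e : la = (2 * z)^-1.
  by rewrite /z; field.
move: dn; rewrite e => dn.
have [_ tr2] := ident2 t z0.
by rewrite tr2 S1z !mulr0 oppr0 mulr0.
Qed.
End Mat.

Theorem mainTheorem9' (n : nat) (A : 'M[R[i]]_n) :
  ((forall (t : R) (mu : R[i]), \det (mu%:M - Hmx A t) != 0 -> T1 A t mu = 0)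
     <-> in_Cxy (PC A)) /\
  ((forall (t : R) (la : R[i]), \det (T2mat A t la) != 0 -> T2 A t la = 0)
     <-> in_Cxy (QC A)).
Proof. by split; [exact: part1 | exact: part2]. Qed.
End S.

Unset Implicit Arguments.
Theorem mainTheorem9 (R : realType) (n : nat) (A : 'M[R[i]]_n) :
  ((forall (t : R) (mu : R[i]), \det (mu%:M - Hmx A t) != 0 -> T1 A t mu = 0)
     <-> in_Cxy (PC A)) /\
  ((forall (t : R) (la : R[i]), \det (T2mat A t la) != 0 -> T2 A t la = 0)
     <-> in_Cxy (QC A)).
Proof. exact: mainTheorem9'. Qed.
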